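(* Let $m=2^\ell\ge 4$ and let $R\subseteq\{0,1\}^N\times W$ be a relation. Then $C^{dt}(R)=O\big(\log_m L^{\oplus,\oplus}(R\circ\mathrm{IND}_m^N)\big)$.
   Context: $\mathrm{IND}_m:[m]\times\{0,1\}^m\to\{0,1\}$, $\mathrm{IND}_m(x,y)=y_x$. Alice's input $x\in[m]^N$ is encoded by Boolean variables $x_{i,j'}$ ($i\in[N]$, $0\le j'<\ell$), the binary representation of $x_i$; Bob's input is $y\in(\{0,1\}^m)^N$ with Boolean variables $y_{i,j}$. $R\circ\mathrm{IND}_m^N$ relates $(x,y)$ to $w$ iff $(\mathrm{IND}_m^N(x,y),w)\in R$, where $\mathrm{IND}_m^N(x,y)=(\mathrm{IND}_m(x_i,y_i))_i$. A parity-communication protocol is a deterministic two-party protocol in which every bit sent by Alice is a parity (over $\mathbb{F}_2$) of her input bits and every bit sent by Bob is a parity of his input bits, chosen depending on the transcript so far; it solves the relation if on each input it outputs a related $w$ (or $\bot$ if none exists). $L^{\oplus,\oplus}(R')$ is the minimum number of leaves of a parity-communication protocol solving $R'$. $C^{dt}(R)$ is the minimum height of a decision tree on $z\in\{0,1\}^N$ outputting some $w$ with $(z,w)\in R$ (or $\bot$ if none exists). *)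

(* Defs.v *)
From mathcomp Require Import all_boot.
Set Implicit Arguments. Unset Strict Implicit. Unset Printing Implicit Defensive.

Definition relation (N : nat) (W : Type) := ('I_N -> bool) -> W -> Prop.

(* "out solves R on input z": out is some w with R z w, or ⊥ (None) iff no such w. *)
Definition correct_output (A W : Type) (R : A -> W -> Prop) (a : A) (out : option W) : Prop :=
  match out with
  | Some w => R a w
  | None => forall w, ~ R a w
  end.

Inductive dtree (N : nat) (W : Type) :=
| DLeaf of option W
| DQuery of 'I_N & dtree N W & dtree N W.

Fixpoint dt_eval N W (t : dtree N W) (z : 'I_N -> bool) : option W :=
  match t with
  | DLeaf o => o
  | DQuery i t0 t1 => if z i then dt_eval t1 z else dt_eval t0 z
  end.

Fixpoint dt_height N W (t : dtree N W) : nat :=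
  match t with
  | DLeaf _ => 0
  | DQuery _ t0 t1 => (maxn (dt_height t0) (dt_height t1)).+1
  end.

Definition dt_solves N W (R : relation N W) (t : dtree N W) : Prop :=
  forall z, correct_output R z (dt_eval t z).

Definition is_Cdt N W (R : relation N W) (d : nat) : Prop :=
  (exists t, dt_solves R t /\ dt_height t = d) /\
  (forall t, dt_solves R t -> d <= dt_height t).

Definition alice_input (N l : nat) := 'I_N -> 'I_(2 ^ l).
Definition bob_input (N l : nat) := 'I_N -> 'I_(2 ^ l) -> bool.

Definition xbit N l (x : alice_input N l) (v : 'I_N * 'I_l) : bool :=
  odd (x v.1 %/ 2 ^ v.2).
Definition ybit N l (y : bob_input N l) (v : 'I_N * 'I_(2 ^ l)) : bool := y v.1 v.2.

Definition IND N l (x : alice_input N l) (y : bob_input N l) : 'I_N -> bool :=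
  fun i => y i (x i).

Definition lift_rel N W l (R : relation N W) :
  (alice_input N l * bob_input N l) -> W -> Prop :=
  fun xy w => R (IND xy.1 xy.2) w.

Definition parity (V : finType) (b : V -> bool) (S : {set V}) : bool :=
  \big[addb/false]_(v in S) b v.

Inductive pprot (N l : nat) (W : Type) :=
| PLeaf of option W
| PAlice of {set 'I_N * 'I_l} & pprot N l W & pprot N l W
| PBob of {set 'I_N * 'I_(2 ^ l)} & pprot N l W & pprot N l W.

Fixpoint pp_eval N l W (p : pprot N l W) (x : alice_input N l) (y : bob_input N l)
  : option W :=
  match p with
  | PLeaf o => o
  | PAlice Sa p0 p1 => if parity (xbit x) Sa then pp_eval p1 x y else pp_eval p0 x y
  | PBob Sb p0 p1 => if parity (ybit y) Sb then pp_eval p1 x y else pp_eval p0 x y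
  end.

Fixpoint pp_leaves N l W (p : pprot N l W) : nat :=
  match p with
  | PLeaf _ => 1
  | PAlice _ p0 p1 => pp_leaves p0 + pp_leaves p1
  | PBob _ p0 p1 => pp_leaves p0 + pp_leaves p1
  end.

Definition pp_solves N l W (R : relation N W) (p : pprot N l W) : Prop :=
  forall x y, correct_output (@lift_rel N W l R) (x, y) (pp_eval p x y).

Definition is_Lpp N l W (R : relation N W) (L : nat) : Prop :=
  (exists p : pprot N l W, pp_solves R p /\ pp_leaves p = L) /\
  (forall p : pprot N l W, pp_solves R p -> L <= pp_leaves p).

(* Main.v *)
Require Import Defs.
From Stdlib Require Import Reals.
From mathcomp Require Import all_boot.
From mathcomp Require Import zify.
From Stdlib Require Import Classical FunctionalExtensionality Lra.
Set Implicit Arguments. Unset Strict Implicit. Unset Printing Implicit Defensive.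

Section Aff.
Variable V : finType.
Implicit Types (u w : {ffun V -> bool}) (F : {set V}).

Definition agree F u w := forall x, x \in F -> u x = w x.
Definition xor3 u (v : {ffun V -> bool}) w : {ffun V -> bool} := [ffun x => u x (+) v x (+) w x].
Definition flip u (v : V) : {ffun V -> bool} := [ffun x => if x == v then ~~ u x else u x].
Definition P1 (S : {ffun V -> bool} -> Prop) := forall u (v : {ffun V -> bool}) w, S u -> S v -> S w -> S (xor3 u v w).
Definition P2 (S : {ffun V -> bool} -> Prop) F := forall a, exists u, S u /\ agree F u a.
Definition P3 (S : {ffun V -> bool} -> Prop) F := forall u u', S u -> S u' -> agree F u u' -> u = u'.
Definition lin (q : {ffun V -> bool} -> bool) := forall u (v : {ffun V -> bool}) w, q (xor3 u v w) = q u (+) q v (+) q w.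

Lemma flip_witness S F q v u1 u3 : P1 S -> P3 S F -> lin q -> v \in F ->
  S u1 -> S u3 -> agree (F :\ v) u1 u3 -> u1 v != u3 v -> q u1 != q u3 ->
  forall w w', S w -> S w' -> agree (F :\ v) w w' -> w v != w' v -> q w != q w'.
Proof.
move=> h1 h3 hl vF S1 S3 a13 n13 q13 w w' Sw Sw' aw nw.
have -> : w' = xor3 w u1 u3.
  apply: h3 => // ; first exact: h1.
  move=> x xF; rewrite ffunE; case: (eqVneq x v) => [->|xv].
    by move: n13 nw; case: (u1 v); case: (u3 v); case: (w v); case: (w' v).
  have xF' : x \in F :\ v by rewrite !inE xv.
  by rewrite (aw x xF') (a13 x xF') addbK.
rewrite hl; move: q13; case: (q u1); case: (q u3); case: (q w) => //.
Qed.

Lemma sensitive S F q u1 u2 : P1 S -> P2 S F -> P3 S F -> lin q ->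
  S u1 -> S u2 -> q u1 != q u2 ->
  exists2 v, v \in F & forall w w', S w -> S w' -> agree (F :\ v) w w' -> w v != w' v -> q w != q w'.
Proof.
move=> h1 h2 h3 hl S1 S2 q12.
have key : forall u1, S u1 -> q u1 != q u2 -> [set x in F | u1 x != u2 x] != set0.
  move=> u Su qu; apply/negP => /eqP E.
  have e: u = u2.
    apply: h3 => // x xF; apply/eqP; apply: contraT => ne.
    have: x \in [set x in F | u x != u2 x] by rewrite inE xF ne.
    by rewrite E inE.
  by move: qu; rewrite e eqxx.
have [k Hk] := ex_intro (fun k => #|[set x in F | u1 x != u2 x]| <= k) _ (leqnn _).
elim: k u1 Hk S1 q12 => [|k IH] u1 Hk S1 q12.
  by move: (key u1 S1 q12); rewrite -cards_eq0 -leqn0 Hk.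
case: (set_0Vmem [set x in F | u1 x != u2 x]) => [E|[v]].
  by move: (key u1 S1 q12); rewrite E eqxx.
rewrite inE => /andP [vF n12].
have [u3 [S3 a3]] := h2 (flip u1 v).
have u3v : u3 v = ~~ u1 v by rewrite (a3 v vF) ffunE eqxx.
have a13 : agree (F :\ v) u1 u3.
  move=> x; rewrite !inE => /andP [xv xF]; by rewrite (a3 x xF) ffunE (negbTE xv).
case: (eqVneq (q u1) (q u3)) => [e13|n13].
  apply: (IH u3) => //; last by rewrite -e13.
  rewrite -ltnS; apply: leq_trans Hk; apply: proper_card; apply/properP; split.
    apply/subsetP => x; rewrite !inE => /andP [xF nx]; rewrite xF /=.
    case: (eqVneq x v) => [->//|xv]; have := a3 x xF; rewrite ffunE (negbTE xv) => <- //.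
  exists v; first by rewrite inE vF n12.
  rewrite inE vF u3v /=; move: n12; by case: (u1 v); case: (u2 v).
exists v => //; apply: (flip_witness h1 h3 hl vF S1 S3 a13) => //.
by rewrite u3v; case: (u1 v).
Qed.

End Aff.

Lemma sum_split n (f : 'I_n.+1 -> bool) :
  \sum_(k < n.+1) f k * 2 ^ k = f ord0 + 2 * \sum_(k < n) f (lift ord0 k) * 2 ^ k.
Proof.
rewrite big_ord_recl expn0 muln1 big_distrr /=; congr (_ + _).
by apply: eq_bigr => k _; rewrite /bump /= expnS; lia.
Qed.

Lemma bits_lt n (f : 'I_n -> bool) : \sum_(k < n) f k * 2 ^ k < 2 ^ n.
Proof.
elim: n f => [|n IH] f; first by rewrite big_ord0.
rewrite sum_split expnS; have := IH (fun k => f (lift ord0 k)); case: (f ord0) => /=; lia.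
Qed.

Lemma bits_odd n (f : 'I_n -> bool) (j : 'I_n) :
  odd ((\sum_(k < n) f k * 2 ^ k) %/ 2 ^ j) = f j.
Proof.
elim: n f j => [|n IH] f j; first by case: j.
rewrite sum_split; case: j => [[|j] hj].
  rewrite expn0 divn1 oddD oddM /=.
  by rewrite addbF oddb; congr f; apply: val_inj.
have hj' : j < n by [].
have -> : Ordinal hj = lift ord0 (Ordinal hj') by apply: val_inj.
rewrite -(IH (fun k => f (lift ord0 k)) (Ordinal hj')) /=.
rewrite expnS divnMA; congr (odd (_ %/ _)).
case: (f ord0) => /=; lia.
Qed.

Section Main.
Variables (N l : nat) (W : Type) (Rel : relation N W).

Definition V := ('I_N * 'I_l + 'I_N * 'I_(2 ^ l))%type.
Definition blk (w : V) : 'I_N := match w with inl p => p.1 | inr p => p.1 end.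
Definition xof (u : {ffun V -> bool}) : alice_input N l :=
  fun i => Ordinal (bits_lt (fun k => u (inl (i, k)))).
Definition yof (u : {ffun V -> bool}) : bob_input N l := fun i j => u (inr (i, j)).
Definition gz u := IND (xof u) (yof u).

Lemma xbit_xof u v : xbit (xof u) v = u (inl v).
Proof. by case: v => i j; rewrite /xbit /= bits_odd. Qed.

Definition cnt (F : {set V}) i := #|[set w : V | (blk w == i) && (w \notin F)]|.
Definition Sig (F : {set V}) (rho : 'I_N -> option bool) := \sum_(i < N | rho i == None) cnt F i.
Definition ext (rho : 'I_N -> option bool) (z : 'I_N -> bool) :=
  forall i b, rho i = Some b -> z i = b.
Definition Hard rho n := forall t : dtree N W,
  (forall z, ext rho z -> correct_output Rel z (dt_eval t z)) -> n <= dt_height t.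

Definition inv (S : {ffun V -> bool} -> Prop) (F : {set V}) (rho : 'I_N -> option bool) := [/\ P1 S, P2 S F, P3 S F,
  (forall i b, rho i = Some b -> (forall w, blk w = i -> w \notin F) /\
        forall u, S u -> gz u i = b) &
  (forall i, rho i = None -> cnt F i < l)].

Lemma cnt_split (F : {set V}) (i : 'I_N) :
  #|[set j : 'I_l | inl (i, j) \notin F]| + #|[set j : 'I_(2 ^ l) | inr (i, j) \notin F]|
  <= cnt F i.
Proof.
set A := [set j : 'I_l | _]; set B := [set j : 'I_(2 ^ l) | _].
have i1 : injective (fun j : 'I_l => (inl (i, j) : V)) by move=> x y [].
have i2 : injective (fun j : 'I_(2 ^ l) => (inr (i, j) : V)) by move=> x y [].
rewrite -(card_imset A i1) -(card_imset B i2).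
have := leq_card_setU [set (inl (i, j) : V) | j in A] [set (inr (i, j) : V) | j in B].
case => _; rewrite (_ : [disjoint _ & _] = true).
  move/eqP => <-; apply: subset_leq_card; apply/subsetP => w.
  rewrite !inE => /orP [] /imsetP [j]; rewrite inE => h -> /=; by rewrite eqxx h.
apply/pred0P => w /=; apply/negbTE/andP => [][/imsetP [j _ ->] /imsetP [k _]] //.
Qed.

Lemma stifle (F : {set V}) (i : 'I_N) (b : bool) : cnt F i <= l -> exists a : {ffun V -> bool},
  forall u : {ffun V -> bool}, (forall w, w \in F -> blk w = i -> u w = a w) -> gz u i = b.
Proof.
move=> hc; have := cnt_split F i.
set A := [set j : 'I_l | _]; set B := [set j : 'I_(2 ^ l) | _] => hs.
pose D := {j : 'I_l | j \notin A}.
pose proj (j : 'I_(2 ^ l)) : {ffun D -> bool} := [ffun d : D => odd (j %/ 2 ^ val (val d))].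
have cD : #|{: D}| = l - #|A|.
  rewrite card_sig; have h := cardC A; rewrite card_ord in h.
  have -> : #|[pred x | x \notin A]| = #|[predC A]| by apply: eq_card.
  lia.
have [pat hp] : exists pat, pat \notin proj @: B.
  case: (pickP [pred p | p \notin proj @: B]) => [p hp|h]; first by exists p.
  have : #|[set: {ffun D -> bool}]| <= #|proj @: B|.
    apply: subset_leq_card; apply/subsetP => p _; have := h p; rewrite /=; by case: (p \in _).
  rewrite cardsT card_ffun card_bool cD => h2.
  have h3 := leq_imset_card proj B.
  have h4 : #|B| < 2 ^ (l - #|A|) by apply: leq_ltn_trans (ltn_expl _ (ltnSn 1)); lia.
  lia.
exists [ffun w : V => match w with
                    | inl (_, j) => if (insub j : option D) is Some d then pat d else false
                    | inr _ => b end].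
move=> u hu; rewrite /gz /IND.
have xB : xof u i \notin B.
  apply/negP => xB; case/negP: hp.
  apply/imsetP; exists (xof u i) => //; apply/ffunP => d; rewrite ffunE /=.
  rewrite bits_odd.
  have dF : (inl (i, val d) : V) \in F.
    by have := valP d; rewrite inE negbK.
  by rewrite (hu _ dF erefl) ffunE valK.
have iF : (inr (i, xof u i) : V) \in F by move: xB; rewrite inE negbK.
by rewrite /yof (hu _ iF erefl) ffunE.
Qed.


Lemma leaf_lemma S F rho z : inv S F rho -> ext rho z -> exists2 u, S u & gz u = z.
Proof.
case=> h1 h2 h3 hI1 hI2 hz.
have [A hA] : exists A : 'I_N -> {ffun V -> bool}, forall i, rho i = None ->
   forall u : {ffun V -> bool}, (forall w, w \in F -> blk w = i -> u w = A i w) -> gz u i = z i.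
  apply: (@fin_all_exists _ (fun _ => {ffun V -> bool}) (fun i a => rho i = None ->
   forall u : {ffun V -> bool}, (forall w, w \in F -> blk w = i -> u w = a w) -> gz u i = z i)).
  move=> i; case E: (rho i) => [b|].
    by exists [ffun=> false].
  have [a ha] := @stifle F i (z i) (ltnW (hI2 i E)); by exists a.
have [u [Su au]] := h2 [ffun w => A (blk w) w].
exists u => //; apply: functional_extensionality => i.
case E: (rho i) => [b|].
  by rewrite (hz _ _ E); have [_ ->] := hI1 _ _ E.
apply: (hA i E) => w wF <-; by rewrite (au w wF) ffunE.
Qed.

Lemma cnt_eq (F F' : {set V}) i : (forall w, blk w = i -> (w \in F') = (w \in F)) ->
  cnt F' i = cnt F i.
Proof.
move=> h; apply: eq_card => w; rewrite !inE; case: (eqVneq (blk w) i) => //= e.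
by rewrite h.
Qed.

Lemma cnt_del (F : {set V}) v : v \in F -> cnt (F :\ v) (blk v) = (cnt F (blk v)).+1.
Proof.
move=> vF; rewrite /cnt.
have -> : [set w | (blk w == blk v) && (w \notin F :\ v)] =
          v |: [set w | (blk w == blk v) && (w \notin F)].
  apply/setP => w; rewrite !inE; case: (eqVneq w v) => [->|wv] /=; first by rewrite eqxx.
  done.
by rewrite cardsU1 inE vF andbF.
Qed.

Lemma Sig_split F rho i0 : rho i0 = None ->
  Sig F rho = cnt F i0 + \sum_(i < N | (rho i == None) && (i != i0)) cnt F i.
Proof. by move=> E; rewrite /Sig (bigD1 i0) ?E. Qed.

Lemma Hard_step rho n i0 : Hard rho n.+1 -> rho i0 = None ->
  exists bz, Hard (fun i => if i == i0 then Some bz else rho i) n.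
Proof.
move=> H E; apply: NNPP => hn.
have h : forall bz, exists t : dtree N W,
   (forall z, ext (fun i => if i == i0 then Some bz else rho i) z ->
      correct_output Rel z (dt_eval t z)) /\ dt_height t < n.
  move=> bz; apply: NNPP => hne; apply: hn; exists bz => t ht.
  case: (leqP n (dt_height t)) => // hlt; case: hne; by exists t.
have [t0 [h0 k0]] := h false; have [t1 [h1 k1]] := h true.
suff : n.+1 <= dt_height (DQuery i0 t0 t1).
  by rewrite /= ltnS leq_max (leqNgt n (dt_height t0)) k0 (leqNgt n (dt_height t1)) k1.
apply: H => z hz /=; case e: (z i0).
  apply: h1 => i b; case: eqP => [-> [] <- //|_]; exact: hz.
apply: h0 => i b; case: eqP => [-> [] <- //|_]; exact: hz.
Qed.

Lemma leaves_gt0 (p : pprot N l W) : 0 < pp_leaves p.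
Proof. elim: p => //= [_ p0 h0 p1 h1|_ p0 h0 p1 h1]; lia. Qed.


Definition corr (p : pprot N l W) (S : {ffun V -> bool} -> Prop) := forall u, S u ->
  correct_output (lift_rel Rel) (xof u, yof u) (pp_eval p (xof u) (yof u)).
Definition Bound (p : pprot N l W) := forall S F rho n, inv S F rho -> corr p S -> Hard rho n ->
  2 ^ (l * n) <= pp_leaves p * 2 ^ Sig F rho.

Lemma step q (p0 p1 : pprot N l W) S F rho n : Bound p0 -> Bound p1 -> lin q ->
  inv S F rho -> Hard rho n ->
  (forall u, S u -> correct_output (lift_rel Rel) (xof u, yof u)
     (if q u then pp_eval p1 (xof u) (yof u) else pp_eval p0 (xof u) (yof u))) ->
  2 ^ (l * n) <= (pp_leaves p0 + pp_leaves p1) * 2 ^ Sig F rho.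
Proof.
move=> B0 B1 hl hinv hH hc.
have Bb : forall b, Bound (if b then p1 else p0) by case.
have [h1 h2 h3 hI1 hI2] := hinv.
case: (classic (exists u1 u2, [/\ S u1, S u2 & q u1 != q u2])) => [[u1 [u2 [S1 S2 q12]]]|hnc]; last first.
  have [u0 [S0 _]] := h2 [ffun=> false].
  have hq : forall u, S u -> q u = q u0.
    move=> u Su; apply: NNPP => ne; apply: hnc; exists u, u0; split => //; exact/eqP.
  have := Bb (q u0) S F rho n hinv _ hH.
  have hc' : corr (if q u0 then p1 else p0) S.
    by move=> u Su; have := hc u Su; rewrite (hq u Su); case: (q u0).
  move=> /(_ hc') h; apply: leq_trans h _; apply: leq_mul => //.
  by case: (q u0); rewrite ?leq_addl ?leq_addr.
have [v vF hv] := sensitive h1 h2 h3 hl S1 S2 q12.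
set i0 := blk v.
have E0 : rho i0 = None.
  case E: (rho i0) => [b|] //; have [hb _] := hI1 _ _ E; by move: (hb v erefl); rewrite vF.
have hcnt : cnt (F :\ v) i0 = (cnt F i0).+1 := cnt_del vF.
have hoth : forall i, i != i0 -> cnt (F :\ v) i = cnt F i.
  move=> i ne; apply: cnt_eq => w bw; rewrite in_setD1; case: (eqVneq w v) => [e|_] //.
  by move: ne; rewrite -bw e eqxx.
have hSig : Sig (F :\ v) rho = (Sig F rho).+1.
  rewrite !(Sig_split _ E0) hcnt addSn; congr (_ + _).+1.
  by apply: eq_bigr => i /andP [_ ne]; exact: hoth.
suff hb : forall b, 2 ^ (l * n) <= pp_leaves (if b then p1 else p0) * 2 ^ (Sig F rho).+1.
  have := hb true; have := hb false; rewrite expnS /=; nia.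
move=> b.
pose Sb u := S u /\ q u = b.
have hS1 : P1 Sb.
  move=> a c d [Sa qa] [Sc qc] [Sd qd]; split; first exact: h1.
  by rewrite hl qa qc qd addbb.
have hS2 : P2 Sb (F :\ v).
  move=> a; have [u [Su au]] := h2 a.
  case: (eqVneq (q u) b) => [e|ne].
    exists u; split => // x; rewrite !inE => /andP [_ xF]; exact: au.
  have [u' [Su' au']] := h2 (flip u v).
  have ag : agree (F :\ v) u u'.
    move=> x; rewrite !inE => /andP [xv xF]; by rewrite (au' x xF) ffunE (negbTE xv).
  have nv : u v != u' v by rewrite (au' v vF) ffunE eqxx; case: (u v).
  exists u'; split.
    split => //; move: ne (hv u u' Su Su' ag nv); by case: (q u); case: (q u'); case: (b).
  move=> x xF; rewrite -(au x) ?(ag x xF) //; by move: xF; rewrite inE => /andP [].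
have hS3 : P3 Sb (F :\ v).
  move=> u u' [Su qu] [Su' qu'] a; apply: h3 => // x xF.
  case: (eqVneq x v) => [->|xv]; last by apply: a; rewrite !inE xv xF.
  apply/eqP; apply: contraT => ne; have := hv u u' Su Su' a ne; by rewrite qu qu' eqxx.
have hcorr : forall S' : {ffun V -> bool} -> Prop, (forall u, S' u -> Sb u) ->
    corr (if b then p1 else p0) S'.
  move=> S' sub u /sub [Su qu]; have := hc u Su; by rewrite qu; case: (b).
case: (ltnP (cnt (F :\ v) i0) l) => hlt.
  have hinv' : inv Sb (F :\ v) rho.
    split => //.
      move=> i c E; have [hb hs] := hI1 i c E; split.
        by move=> w bw; rewrite inE (negbTE (hb w bw)) andbF.
      by move=> u [Su _]; exact: hs.
    move=> i E; case: (eqVneq i i0) => [->//|ne]; rewrite hoth //; exact: hI2.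
  have := Bb b Sb (F :\ v) rho n hinv' (hcorr _ (fun u h => h)) hH; by rewrite hSig.
have cl : cnt (F :\ v) i0 = l by have := hI2 i0 E0; lia.
case: n hH => [|n] hH.
  by rewrite muln0 expn0 muln_gt0 leaves_gt0 expn_gt0.
have [bz hz] := Hard_step hH E0.
have [a ha] := @stifle (F :\ v) i0 bz (eq_leq cl).
pose S2' u := Sb u /\ (forall w, w \in F :\ v -> blk w = i0 -> u w = a w).
pose F2 := (F :\ v) :\: [set w | blk w == i0].
pose rho2 := fun i => if i == i0 then Some bz else rho i.
have inv2 : inv S2' F2 rho2.
  split.
  - move=> x y w [Sx ax] [Sy ay] [Sw aw]; split; first exact: hS1.
    move=> w0 h e; rewrite ffunE ax // ay // aw //; by case: (a w0).
  - move=> a0; have [u [[Su qu] au]] := hS2 [ffun w => if blk w == i0 then a w else a0 w].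
    exists u; split.
      split => //; move=> w wF e; by rewrite (au w wF) ffunE e eqxx.
    move=> w; rewrite inE inE => /andP [nb wF]; by rewrite (au w wF) ffunE (negbTE nb).
  - move=> u u' [Su au] [Su' au'] ag; apply: hS3 => // w wF.
    case: (eqVneq (blk w) i0) => e; first by rewrite au // au'.
    by apply: ag; rewrite inE inE e wF.
  - move=> i c; rewrite /rho2; case: eqP => [-> [] <-|ne E].
      split; first by move=> w bw; rewrite inE inE bw eqxx.
      move=> u [_ au]; apply: ha => w wF bw; exact: au.
    have [hb hs] := hI1 i c E; split.
      by move=> w bw; rewrite !inE (negbTE (hb w bw)) !andbF.
    by move=> u [[Su _] _]; exact: hs.
  - move=> i; rewrite /rho2; case: eqP => // ne E.
    rewrite (@cnt_eq F); first exact: hI2.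
    move=> w bw; have ni : (i == i0) = false by apply/eqP.
    have wv : (w == v) = false by apply/eqP => e; apply: ne; rewrite -bw e.
    by rewrite !inE bw ni wv.
have hSig2 : Sig F2 rho2 + l = (Sig F rho).+1.
  rewrite (Sig_split _ E0).
  suff -> : Sig F2 rho2 = \sum_(i < N | (rho i == None) && (i != i0)) cnt F i by lia.
  rewrite /Sig; apply: eq_big => i.
    rewrite /rho2; case: (eqVneq i i0) => [->|ne] /=; first by rewrite E0 andbF.
    by rewrite andbT.
  rewrite /rho2; case: (eqVneq i i0) => [//|ne] _; apply: cnt_eq => w bw.
  have wv : (w == v) = false by apply/eqP => e; move: ne; rewrite -bw e eqxx.
  by rewrite !inE bw (negbTE ne) wv.
have hc2 : corr (if b then p1 else p0) S2' by apply: hcorr => u [].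
have := Bb b S2' F2 rho2 n inv2 hc2 hz.
rewrite -hSig2 mulnS expnD expnD; nia.
Qed.


Lemma linA (Sa : {set 'I_N * 'I_l}) : lin (fun u => parity (xbit (xof u)) Sa).
Proof.
have e : forall u', parity (xbit (xof u')) Sa = \big[addb/false]_(x in Sa) u' (inl x).
  by move=> u'; apply: eq_bigr => x _; rewrite xbit_xof.
move=> u v w; rewrite !e.
under eq_bigr => x _ do rewrite ffunE.
by rewrite !big_split.
Qed.

Lemma linB (Sb : {set 'I_N * 'I_(2 ^ l)}) : lin (fun u => parity (ybit (yof u)) Sb).
Proof.
have e : forall u', parity (ybit (yof u')) Sb = \big[addb/false]_(x in Sb) u' (inr x).
  by move=> u'; apply: eq_bigr => -[x y] _.
move=> u v w; rewrite !e.
under eq_bigr => x _ do rewrite ffunE.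
by rewrite !big_split.
Qed.

Lemma main (p : pprot N l W) : Bound p.
Proof.
elim: p => [o|Sa p0 IH0 p1 IH1|Sb p0 IH0 p1 IH1] S F rho n hinv hc hH /=.
- case: n hH => [|n] hH; first by rewrite muln0 expn0 mul1n expn_gt0.
  suff : n.+1 <= dt_height (DLeaf N o) by [].
  apply: hH => z hz; have [u Su e] := leaf_lemma hinv hz; rewrite -e; exact: hc u Su.
- exact: (@step (fun u => parity (xbit (xof u)) Sa) p0 p1 S F rho n IH0 IH1 (linA Sa) hinv hH hc).
- exact: (@step (fun u => parity (ybit (yof u)) Sb) p0 p1 S F rho n IH0 IH1 (linB Sb) hinv hH hc).
Qed.

Lemma final (p : pprot N l W) d : 0 < l -> pp_solves Rel p ->
  (forall t, dt_solves Rel t -> d <= dt_height t) -> 2 ^ (l * d) <= pp_leaves p.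
Proof.
move=> l0 hp hmin.
have inv0 : inv (fun _ => True) setT (fun _ => None).
  split => //.
  - by move=> a; exists a.
  - by move=> u u' _ _ ag; apply/ffunP => x; apply: ag; rewrite inE.
  - move=> i; rewrite /cnt (_ : [set w | _] = set0) ?cards0 //.
    by apply/setP => w; rewrite !inE andbF.
have S0 : Sig setT (fun _ => None) = 0.
  rewrite /Sig big1 // => i _; rewrite /cnt (_ : [set w | _] = set0) ?cards0 //.
  by apply/setP => w; rewrite !inE andbF.
have := @main p (fun _ => True) setT (fun _ => None) d inv0 (fun u _ => hp _ _) _.
rewrite S0 expn0 muln1; apply => t ht; apply: hmin => z; by apply: ht => i b.
Qed.

End Main.

Lemma INR_exp2 n : INR (2 ^ n) = pow (INR 2) n.
Proof.
elim: n => [|n IH]; first by [].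
rewrite expnS mult_INR IH /=; reflexivity.
Qed.

Theorem theorem17 :
  exists c : R, Rlt 0 c /\
    forall (l N : nat) (W : Type) (Rel : relation N W) (d L : nat),
      2 <= l ->
      is_Cdt Rel d ->
      is_Lpp l Rel L ->
      Rle (INR d) (Rmult c (Rdiv (ln (INR L)) (ln (INR (2 ^ l))))).
Proof.
exists (INR 1); split; first by apply: lt_0_INR; apply/ltP.
move=> l N W Rel d L hl [_ hmin] [[p [hp <-]] _].
have key := final (ltn_trans (ltn0Sn 0) hl) hp hmin.
have two : Rlt (INR 1) (INR 2) by apply: lt_INR; apply/ltP.
have hL : Rle (pow (INR 2) (l * d)) (INR (pp_leaves p)).
  rewrite -INR_exp2; apply: le_INR; exact/leP.
have ln2 : Rlt (INR 0) (ln (INR 2)).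
  have o : Rlt (INR 0) (INR 1) by apply: lt_INR; apply/ltP.
  have h := ln_increasing (INR 1) (INR 2) o two.
  by rewrite /= ln_1 in h *.
have lpos : Rlt (INR 0) (INR l) by apply: lt_INR; apply/ltP; apply: ltn_trans hl.
have t0 : Rlt (INR 0) (INR 2) by apply: lt_INR; apply/ltP.
rewrite INR_exp2 ln_pow; last by rewrite /= in t0 *; lra.
have h1 : Rle (Rmult (INR (l * d)) (ln (INR 2))) (ln (INR (pp_leaves p))).
  rewrite -ln_pow; last by rewrite /= in t0 *; lra.
  have pp : Rlt (INR 0) (pow (INR 2) (l * d)) by apply: pow_lt; rewrite /= in t0 *; lra.
  case: (Rle_lt_or_eq_dec _ _ hL) => [h|<-]; last by apply: Rle_refl.
  by apply: Rlt_le; apply: ln_increasing.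
rewrite mult_INR in h1.
rewrite /= in lpos ln2 *.
rewrite Rmult_1_l; unfold Rdiv.
apply (Rmult_le_reg_r (Rmult (INR l) (ln (INR 2)))); first by apply: Rmult_lt_0_compat.
rewrite Rmult_assoc Rinv_l; last by apply: Rgt_not_eq; apply: Rmult_lt_0_compat.
rewrite Rmult_1_r. 
have e : Rmult (INR d) (Rmult (INR l) (ln (INR 2))) = Rmult (Rmult (INR l) (INR d)) (ln (INR 2)) by ring.
by rewrite e.
Qed.
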